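(* Let $d \geq 1$ and $\epsilon \geq 0$, $\kappa > 0$ be real numbers. Let $\mathbf{h}_1, \mathbf{h}_2 \in \mathbb{R}^d$ be two state vectors of an RNN with unit Euclidean norm, and let $\tilde{\mathbf{h}}_1, \tilde{\mathbf{h}}_2 \in \{\pm 1\}^d$ be their saturated versions. Assume the RNN is $\epsilon$-saturated with respect to these states, i.e. $\|\mathbf{h}_i - \tilde{\mathbf{h}}_i\|_2 \leq \epsilon$ for $i \in \{1,2\}$. If $\cos(\mathbf{h}_1, \mathbf{h}_2) \geq 1 - \kappa$ with $$\sqrt{\kappa} < \sqrt{2}\left(\frac{1}{\sqrt{d}} - \epsilon\right),$$ then $\tilde{\mathbf{h}}_1 = \tilde{\mathbf{h}}_2$ (i.e. the two vectors represent the same state of the saturated RNN / DFA).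
   Context: An RNN state vector $\mathbf{h}(x,\theta) \in \mathbb{R}^d$ is viewed as a function of the input string $x$ and the parameter vector $\theta$ of the network (e.g. a simple RNN $\mathbf{h}_{i+1} = \tanh(U\mathbf{h}_i + V\mathbf{x}_{i+1})$). Its saturated version is $\tilde{\mathbf{h}}(x,\theta) = \lim_{\rho \to \infty} \mathbf{h}(x, \rho\theta)$, which for a $\tanh$ RNN takes values in $\{\pm 1\}^d$. Here $\cos(\mathbf{u},\mathbf{v}) = \mathbf{u}^\top \mathbf{v} / (\|\mathbf{u}\|_2 \|\mathbf{v}\|_2)$ denotes cosine similarity. *)

(* Defs.v *)
From mathcomp Require Import all_boot all_order all_algebra.
Set Implicit Arguments. Unset Strict Implicit. Unset Printing Implicit Defensive.
Import Order.TTheory GRing.Theory Num.Theory.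
Local Open Scope ring_scope.

Definition dotv (R : rcfType) (d : nat) (u v : 'rV[R]_d) : R :=
  \sum_(i < d) u ord0 i * v ord0 i.

Definition norm2 (R : rcfType) (d : nat) (u : 'rV[R]_d) : R :=
  Num.sqrt (dotv u u).

Definition cosv (R : rcfType) (d : nat) (u v : 'rV[R]_d) : R :=
  dotv u v / (norm2 u * norm2 v).

Definition is_sign_vector (R : rcfType) (d : nat) (u : 'rV[R]_d) : Prop :=
  forall i : 'I_d, u ord0 i = 1 \/ u ord0 i = -1.

(* Main.v *)
Require Import Defs.
From mathcomp Require Import all_boot all_order all_algebra.
From mathcomp Require Import ring lra.
Set Implicit Arguments.
Import Order.TTheory GRing.Theory Num.Theory.
Local Open Scope ring_scope.

Lemma dotv_ge0 (R : rcfType) (d : nat) (u : 'rV[R]_d) : 0 <= dotv u u.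
Proof. by apply: sumr_ge0 => i _; rewrite -expr2 sqr_ge0. Qed.

Lemma coord_sq_le (R : rcfType) (d : nat) (u : 'rV[R]_d) (i : 'I_d) :
  u ord0 i ^+ 2 <= dotv u u.
Proof.
rewrite /dotv (bigD1 i) //= expr2 lerDl.
by apply: sumr_ge0 => j _; rewrite -expr2 sqr_ge0.
Qed.

Lemma coord_le (R : rcfType) (d : nat) (u : 'rV[R]_d) (i : 'I_d) :
  `|u ord0 i| <= norm2 u.
Proof.
by rewrite /norm2 -sqrtr_sqr ler_sqrt ?dotv_ge0 ?coord_sq_le.
Qed.

Lemma norm1_dot (R : rcfType) (d : nat) (u : 'rV[R]_d) :
  norm2 u = 1 -> dotv u u = 1.
Proof.
move=> h; rewrite -(sqr_sqrtr (@dotv_ge0 _ _ u)).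
by rewrite /norm2 in h; rewrite h expr1n.
Qed.

Lemma dot_sub (R : rcfType) (d : nat) (u v : 'rV[R]_d) :
  dotv (u - v) (u - v) = dotv u u + dotv v v - 2 * dotv u v.
Proof.
rewrite /dotv mulr_sumr -big_split -sumrB /=; apply: eq_bigr => i _.
rewrite !mxE; ring.
Qed.

Theorem proposition1 (R : rcfType) (d : nat) (eps kappa : R)
  (h1 h2 ht1 ht2 : 'rV[R]_d) :
  (1 <= d)%N -> 0 <= eps -> 0 < kappa ->
  norm2 h1 = 1 -> norm2 h2 = 1 ->
  is_sign_vector ht1 -> is_sign_vector ht2 ->
  norm2 (h1 - ht1) <= eps -> norm2 (h2 - ht2) <= eps ->
  cosv h1 h2 >= 1 - kappa ->
  Num.sqrt kappa < Num.sqrt 2 * (1 / Num.sqrt (d%:R) - eps) ->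
  ht1 = ht2.
Proof.
move=> d1 e0 k0 n1 n2 s1 s2 e1 e2 hc hk.
have hd : 1 <= Num.sqrt (d%:R : R).
  by rewrite -{1}sqrtr1 ler_sqrt ?ler0n // ler1n.
have hinv : 1 / Num.sqrt (d%:R : R) <= 1.
  by rewrite div1r invf_le1 // (lt_le_trans ltr01 hd).
have s20 : 0 <= Num.sqrt (2 : R) := sqrtr_ge0 _.
have s2sq : Num.sqrt (2 : R) ^+ 2 = 2 by rewrite sqr_sqrtr // ler0n.
have sk0 : 0 <= Num.sqrt kappa := sqrtr_ge0 _.
have sksq : Num.sqrt kappa ^+ 2 = kappa by rewrite sqr_sqrtr // ltW.
have hk2 : Num.sqrt kappa < Num.sqrt 2 * (1 - eps).
  apply: (lt_le_trans hk); rewrite ler_wpM2l //; lra.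
have heps : eps < 1.
  have : 0 < Num.sqrt (2:R) * (1 - eps) by apply: le_lt_trans hk2.
  move=> h; rewrite ltNge; apply/negP => he.
  have : Num.sqrt (2:R) * (1 - eps) <= 0.
    rewrite mulr_ge0_le0 //; lra.
  lra.
have kb : kappa < 2 * (1 - eps) ^+ 2.
  rewrite -sksq -s2sq -exprMn ltr_pXn2r // ?nnegrE //.
  by apply: mulr_ge0 => //; lra.
have hdot : dotv h1 h2 >= 1 - kappa.
  by move: hc; rewrite /cosv n1 n2 mulr1 divr1.
have hsub : dotv (h1 - h2) (h1 - h2) <= 2 * kappa.
  rewrite dot_sub !norm1_dot //; lra.
apply/rowP => i.
apply/eqP; rewrite -[_ == _]negbK; apply/negP => hne.
have a := @coord_sq_le _ _ (h1 - h2) i.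
have b1 := le_trans (@coord_le _ _ (h1 - ht1) i) e1.
have b2 := le_trans (@coord_le _ _ (h2 - ht2) i) e2.
move: a b1 b2; rewrite !mxE !ler_norml => a /andP[b1 b1'] /andP[b2 b2'].
have {}a := le_trans a hsub.
move: hne b1 b1' b2 b2'; case: (s1 i) => ->; case: (s2 i) => ->;
  rewrite ?eqxx // => _ b1 b1' b2 b2'.
- have h1i : 1 - eps <= h1 ord0 i by lra.
  have h2i : h2 ord0 i <= -1 + eps by lra.
  have hx : 2 * (1 - eps) <= h1 ord0 i - h2 ord0 i by lra.
  have hy : 0 <= 2 * (1 - eps) by lra.
  have := ler_pM hy hy hx hx.
  nra.
- have h1i : h1 ord0 i <= -1 + eps by lra.
  have h2i : 1 - eps <= h2 ord0 i by lra.
  have hx : 2 * (1 - eps) <= h2 ord0 i - h1 ord0 i by lra.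
  have hy : 0 <= 2 * (1 - eps) by lra.
  have := ler_pM hy hy hx hx.
  rewrite -sqrrN opprB in a; nra.
Qed.
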